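(* Consider a non-explosive stochastic reaction network as in the context with product-form propensities, and fix $T>0$ and $c^*>0$. Suppose that (a) (Property 1 at $(T,c^* )$) for every unconsuming reaction $j \in \mathcal{U}$ there exists $\epsilon_j>0$ with $\mathbb{E}\left(e^{\epsilon_j R_j(T,c^* )}\right) < \infty$; and (b) either reaction $1$ is unconsuming ($1 \in \mathcal{U}$), or $1\in\mathcal{C}$ and for every $y \in [0,\infty)^n$ the set \[ \mathcal{R}_y = \Big\{ \xi = (\xi_j)_{j\in\mathcal{C}} \in [0,\infty)^{\mathcal{C}} : y + \sum_{j\in\mathcal{C}} \nu_j \xi_j \ge 0 \text{ componentwise} \Big\} \] is bounded in the coordinate $\xi_1$, i.e. $\sup\{\xi_1 : \xi \in \mathcal{R}_y\}<\infty$. Then there exists $\epsilon>0$ such that \[ \mathbb{E}\left[ \left(\frac{c^*+\epsilon}{c^*}\right)^{R_1(T,c^* )} \right] < \infty . \]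
   Context: Stochastic reaction network: $n$ species, $m$ reaction channels with stoichiometric vectors $\nu_j = (\nu_{1j},\dots,\nu_{nj}) \in \mathbb{Z}^n$ and propensities of product form $a_j(x,c_j) = c_j b_j(x)$ with $c_j>0$ and $b_j:\mathbb{Z}_+^n\to[0,\infty)$; the parameter of interest is $c=c_1$ with nominal value $c^*$. On a probability space carrying independent unit-rate Poisson processes $Y_1,\dots,Y_m$, $X(t,c) = x_0 + \sum_j \nu_j R_j(t,c)$, $R_j(t,c) = Y_j\left(\int_0^t a_j(X(s,c),c)\,ds\right)$, with fixed $x_0 \in \mathbb{Z}_+^n$; non-explosive means $R_j(t,c)<\infty$ a.s. for all $t,c,j$. A reaction $j$ is called unconsuming if $\nu_{ij}\ge 0$ for all $i=1,\dots,n$, and consuming otherwise; $\mathcal{U}$ and $\mathcal{C}$ denote the index sets of unconsuming and consuming reactions. *)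

(* Defs.v *)
From HB Require Import structures.
From mathcomp Require Import all_boot all_order all_algebra.
From mathcomp Require Import all_classical all_reals all_analysis.
Set Implicit Arguments. Unset Strict Implicit. Unset Printing Implicit Defensive.
Import Order.TTheory GRing.Theory Num.Theory.
Local Open Scope classical_set_scope.
Local Open Scope ring_scope.

Definition poisson_pmf {R : realType} (lam : R) (k : nat) : R :=
  expR (- lam) * lam ^+ k / (k`!)%:R.

(* Y : 'I_m -> Omega -> R -> nat is a family of m mutually independent
   unit-rate Poisson processes on the probability space (Omega, P):
   - every path starts at 0, is nondecreasing and right-continuous on [0,oo);
   - each Y j t is a random variable;
   - joint finite-dimensional distributions: for every grid
     0 = t_0 < t_1 < ... < t_k and all integers n_{j,i}, the probability that
     Y_j(t_{i+1}) - Y_j(t_i) = n_{j,i} for all j < m, i < k equals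
     prod_j prod_i Poisson(t_{i+1}-t_i)(n_{j,i})
     (independent Poisson increments, independent across channels). *)
Definition indep_unit_poisson {d} {Omega : measurableType d} {R : realType}
  (P : probability Omega R) (m : nat) (Y : 'I_m -> Omega -> R -> nat) : Prop :=
  [/\ (forall j w, Y j w 0 = 0%N),
      (forall j w s t, 0 <= s -> s <= t -> (Y j w s <= Y j w t)%N),
      (forall j w t, 0 <= t ->
          exists2 e : R, 0 < e & forall s, t <= s -> s < t + e -> Y j w s = Y j w t),
      (forall j t, measurable_fun [set: Omega] (fun w => (Y j w t)%:R : R)) &
      (forall (k : nat) (tt : nat -> R) (nn : 'I_m -> nat -> nat),
          tt 0%N = 0 -> (forall i, tt i < tt i.+1) ->
          P [set w | forall (j : 'I_m) (i : nat), (i < k)%N ->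
                       (Y j w (tt i.+1) - Y j w (tt i))%N = nn j i]
          = (\prod_(j < m) \prod_(i < k) poisson_pmf (tt i.+1 - tt i) (nn j i))%:E)].

Definition unconsuming (n m : nat) (nu : 'I_m -> 'I_n -> int) (j : 'I_m) : Prop :=
  forall i : 'I_n, (0 <= nu j i)%R.

Definition consuming (n m : nat) (nu : 'I_m -> 'I_n -> int) (j : 'I_m) : Prop :=
  ~ unconsuming nu j.

(* The rate constants: c_1 = c (the parameter of interest, reaction index
   j1), c_j = cs j for the other reactions. *)
Definition rate {R : realType} (m : nat) (j1 : 'I_m) (cs : 'I_m -> R) (c : R)
  (j : 'I_m) : R := if j == j1 then c else cs j.

Definition time_change_repr {d} {Omega : measurableType d} {R : realType}
  (P : probability Omega R) (n m : nat) (nu : 'I_m -> 'I_n -> int)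
  (b : 'I_m -> ('I_n -> nat) -> R) (cc : 'I_m -> R) (x0 : 'I_n -> nat)
  (Y : 'I_m -> Omega -> R -> nat)
  (X : Omega -> R -> ('I_n -> nat)) (Rc : 'I_m -> Omega -> R -> nat) : Prop :=
  (forall j t, measurable_fun [set: Omega] (fun w => (Rc j w t)%:R : R)) /\
  {ae P, forall w, forall t : R, 0 <= t ->
     (forall i : 'I_n, ((X w t i)%:Z = (x0 i)%:Z + \sum_(j < m) nu j i * (Rc j w t)%:Z)%R) /\
     (forall j : 'I_m,
        measurable_fun `[0, t] (fun s => cc j * b j (X w s)) /\
        exists r : R,
          (\int[lebesgue_measure]_(s in `[0%R, t]%classic) (cc j * b j (X w s))%:E = r%:E)%E
          /\ Rc j w t = Y j w r)}.

(* Main.v *)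
Require Import Defs.
From HB Require Import structures.
From mathcomp Require Import all_boot all_order all_algebra.
From mathcomp Require Import all_classical all_reals all_analysis.
Import Order.TTheory GRing.Theory Num.Theory.
Local Open Scope classical_set_scope.
Local Open Scope ring_scope.


Lemma exp_sum_le {R : realType} m (p : pred 'I_m) (x : 'I_m -> R) (c : R) :
  (forall j, 0 <= x j) -> 0 <= c ->
  expR (c * \sum_(j < m | p j) x j) <= 1 + \sum_(j < m | p j) expR (c * m%:R * x j).
Proof.
move=> x0 c0.
have S0 : 0 <= \sum_(j < m | p j) expR (c * m%:R * x j) by apply: sumr_ge0 => j _; exact: expR_ge0.
have [[j pj]|np] := pselect (exists j, p j); last first.
  rewrite big_pred0; last by move=> j /=; apply/negP => pj; apply: np; exists j.
  by rewrite mulr0 expR0 lerDl.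
pose M := \big[Order.max/0]_(j < m | p j) x j.
have M0 : 0 <= M by apply: bigmax_ge_id.
have hS : \sum_(j < m | p j) x j <= m%:R * M.
  apply: (@le_trans _ _ (\sum_(j < m | p j) M)).
    by apply: ler_sum => i pi; exact: le_bigmax_cond.
  apply: (@le_trans _ _ (\sum_(j < m) M)).
    rewrite [leRHS](bigID p) /= lerDl; exact: sumr_ge0.
  by rewrite sumr_const card_ord mulr_natl.
have [j0 pj0 Mj0] := @eq_bigmax _ _ _ 0 j p x pj (fun i _ => x0 i).
apply: (@le_trans _ _ (expR (c * m%:R * M))).
  by rewrite ler_expR -mulrA; apply: ler_wpM2l.
rewrite -/M in Mj0; rewrite Mj0.
apply: (@le_trans _ _ (\sum_(j < m | p j) expR (c * m%:R * x j))); last by rewrite lerDr.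
rewrite (bigD1 j0) //= lerDl; apply: sumr_ge0 => i _; exact: expR_ge0.
Qed.

Lemma key d (Omega : measurableType d) (R : realType) (P : probability Omega R) m
  (r : 'I_m -> Omega -> R) (p : pred 'I_m) (j1 : 'I_m) (A D eps0 : R) :
  (forall j, measurable_fun setT (r j)) -> (forall j w, 0 <= r j w) ->
  0 <= A -> 0 <= D -> 0 < eps0 ->
  (forall j, p j -> (\int[P]_w (expR (eps0 * r j w))%:E < +oo)%E) ->
  {ae P, forall w, r j1 w <= A + D * \sum_(j < m | p j) r j w} ->
  exists2 a : R, 0 < a & (\int[P]_w (expR (a * r j1 w))%:E < +oo)%E.
Proof.
move=> mr r0 A0 D0 e0 hint hae.
have dm0 : 0 < 1 + D * m%:R by rewrite ltr_wpDr // mulr_ge0.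
pose a := eps0 / (1 + D * m%:R).
have a0 : 0 < a by rewrite divr_gt0.
have aE : a * D * m%:R <= eps0.
  have : a * (1 + D * m%:R) = eps0 by rewrite /a mulrVK // unitfE gt_eqF.
  rewrite mulrDr mulr1 mulrA => <-; rewrite lerDr; exact: ltW.
pose K := expR (a * A).
have K0 : 0 <= K by exact: expR_ge0.
have mexp : forall (c : R) j, measurable_fun setT (fun w => expR (c * r j w)).
  move=> c j; apply: measurableT_comp; first exact: measurable_realfun.measurable_expR.
  by apply: measurable_realfun.measurable_funM => //; exact: mr.
pose g := fun w => (K%:E + \sum_(j < m | p j) (K%:E * (expR (eps0 * r j w))%:E))%E.
have hI : P.-integrable setT g.
  apply: (integrableD measurableT).
    exact: (finite_measure_integrable_cst P K measurableT).
  apply: (integrable_sum measurableT) => j pj.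
  apply: (integrableZl measurableT).
  apply/integrableP; split; first by apply/measurable_realfun.measurable_EFinP; exact: mexp.
  rewrite (eq_integral (fun w => (expR (eps0 * r j w))%:E)); first exact: hint.
  by move=> w _; rewrite gee0_abs // lee_fin expR_ge0.
have g0 : forall w, (0 <= g w)%E.
  move=> w; rewrite /g sumEFin -EFinD lee_fin; apply: addr_ge0 => //.
  by apply: sumr_ge0 => j _; apply: mulr_ge0 => //; exact: expR_ge0.
move/integrableP: (hI) => [mg hg].
have hg' : (\int[P]_w g w < +oo)%E.
  by rewrite (eq_integral (fun w => `|g w|)%E) // => w _; rewrite gee0_abs.
exists a => //.
apply: le_lt_trans hg'.
apply: ae_ge0_le_integral => //.
- by apply/measurable_realfun.measurable_EFinP; exact: mexp.
apply: filterS hae => w hw _.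
rewrite /g sumEFin -EFinD lee_fin.
apply: (@le_trans _ _ (expR (a * (A + D * \sum_(j < m | p j) r j w)))).
  by rewrite ler_expR; apply: ler_wpM2l => //; exact: ltW.
rewrite (mulrDr a) expRD -/K -mulr_sumr.
rewrite -{2}(mulr1 K) -mulrDr.
apply: ler_wpM2l => //.
rewrite mulrA.
have aD0 : 0 <= a * D by apply: mulr_ge0 => //; exact: ltW.
apply: le_trans (@exp_sum_le _ m p (fun j => r j w) _ (r0^~ w) aD0) _.
rewrite lerD2l; apply: ler_sum => j _; rewrite ler_expR.
by apply: ler_wpM2r => //.
Qed.

Lemma cons_bound {R : realType} n m (nu : 'I_m -> 'I_n -> int) (x0 : 'I_n -> nat)
  (r : 'I_m -> R) (j1 : 'I_m) (M1 : R) :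
  (forall j, 0 <= r j) ->
  (forall i, 0 <= (x0 i)%:R + \sum_(j < m) (nu j i)%:~R * r j) ->
  (forall xi : 'I_m -> R, (forall j, consuming nu j -> 0 <= xi j) ->
    (forall i, 0 <= 1 + \sum_(j < m | `[< consuming nu j >]) (nu j i)%:~R * xi j) ->
    xi j1 <= M1) ->
  r j1 <= Num.max M1 0 * (1 + \sum_(i < n) (x0 i)%:R) +
          Num.max M1 0 * (\sum_(j < m | `[< unconsuming nu j >]) \sum_(i < n) (nu j i)%:~R) *
          \sum_(j < m | `[< unconsuming nu j >]) r j.
Proof.
move=> r0 hX hM.
pose U := fun j => `[< unconsuming nu j >].
have nuU : forall j i, U j -> 0 <= (nu j i)%:~R :> R.
  by move=> j i /asboolP Uj; rewrite ler0z; exact: Uj.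
pose y := fun i => (x0 i)%:R + \sum_(j < m | U j) (nu j i)%:~R * r j.
have y0 : forall i, 0 <= y i.
  move=> i; apply: addr_ge0 => //; apply: sumr_ge0 => j Uj.
  by apply: mulr_ge0 => //; exact: nuU.
pose s := 1 + \sum_(i < n) y i.
have s0 : 0 < s by rewrite ltr_wpDr // sumr_ge0.
have ys : forall i, y i <= s.
  move=> i; rewrite /s (bigD1 i) //= addrCA lerDl.
  by apply: addr_ge0 => //; apply: sumr_ge0.
have cE : forall j, `[< consuming nu j >] = ~~ U j by move=> j; rewrite /consuming asbool_neg.
have hxi := hM (fun j => r j / s).
have M1s : r j1 / s <= M1.
  apply: hxi.
    by move=> j _; apply: divr_ge0 => //; exact: ltW.
  move=> i.
  have -> : \sum_(j < m | `[< consuming nu j >]) (nu j i)%:~R * (r j / s) =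
            (\sum_(j < m | ~~ U j) (nu j i)%:~R * r j) / s.
    rewrite mulr_suml; apply: eq_big => [j|j _]; first by rewrite cE.
    by rewrite mulrA.
  have E : forall Z, 1 + Z / s = (s + Z) / s.
    by move=> Z; rewrite mulrDl divff // gt_eqF.
  rewrite E; apply: divr_ge0; last exact: ltW.
  apply: le_trans (hX i) _.
  rewrite (bigID U) /= addrA lerD2r; exact: ys.
have Mx0 : 0 <= Num.max M1 0 by rewrite le_max lexx orbT.
have rs : r j1 <= Num.max M1 0 * s.
  rewrite -ler_pdivrMr //; apply: le_trans M1s _; rewrite le_max lexx //.
apply: le_trans rs _.
rewrite -mulrA -mulrDr; apply: ler_wpM2l => //.
rewrite /s /y big_split /= addrA lerD2l.
rewrite (exchange_big _ _ _ _ (fun j => U j)) /=.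
rewrite mulr_sumr; apply: ler_sum => j Uj.
rewrite -mulr_suml; apply: ler_wpM2r => //.
rewrite (bigD1 j) //= lerDl; apply: sumr_ge0 => k /andP[Uk _].
by apply: sumr_ge0 => i _; exact: nuU.
Qed.
Theorem mainTheorem6 (d : measure_display) (Omega : measurableType d)
  (R : realType) (P : probability Omega R)
  (n m : nat) (hm : (0 < m)%N)
  (nu : 'I_m -> 'I_n -> int) (b : 'I_m -> ('I_n -> nat) -> R)
  (cs : 'I_m -> R) (x0 : 'I_n -> nat)
  (Y : 'I_m -> Omega -> R -> nat)
  (X : R -> Omega -> R -> ('I_n -> nat))
  (Rc : R -> 'I_m -> Omega -> R -> nat)
  (T cstar : R) :
  let j1 : 'I_m := Ordinal hm in
  (forall j x, 0 <= b j x) ->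
  (forall j, 0 < cs j) ->
  indep_unit_poisson P Y ->
  (* X(.,c), R(.,c) solve the random time-change equations for every c > 0
     (non-explosive network) *)
  (forall c, 0 < c -> time_change_repr P nu b (rate j1 cs c) x0 Y (X c) (Rc c)) ->
  0 < T -> 0 < cstar ->
  (* (a) Property 1 at T and c-star *)
  (forall j, unconsuming nu j ->
     exists2 eps : R, 0 < eps &
       (\int[P]_w (expR (eps * (Rc cstar j w T)%:R))%:E < +oo)%E) ->
  (* (b) *)
  (unconsuming nu j1 \/
   (consuming nu j1 /\
    forall y : 'I_n -> R, (forall i, 0 <= y i) ->
      exists M : R, forall xi : 'I_m -> R,
        (forall j, consuming nu j -> 0 <= xi j) ->
        (forall i, 0 <= y i + \sum_(j < m | `[< consuming nu j >]) (nu j i)%:~R * xi j) ->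
        xi j1 <= M)) ->
  exists2 eps : R, 0 < eps &
    (\int[P]_w (((cstar + eps) / cstar) ^+ (Rc cstar j1 w T))%:E < +oo)%E.
Proof.
move=> j1 b0 cs0 hY htc T0 c0 ha hb.
have [mRc hae] := htc cstar c0.
pose r := fun j w => (Rc cstar j w T)%:R : R.
have r0 : forall j w, 0 <= r j w by move=> j w; exact: ler0n.
have mr : forall j, measurable_fun setT (r j) by move=> j; exact: mRc.
pose U := fun j => `[< unconsuming nu j >].
have : forall j, exists e : R, 0 < e /\ (unconsuming nu j ->
        (\int[P]_w (expR (e * r j w))%:E < +oo)%E).
  move=> j; have [hj|hj] := pselect (unconsuming nu j).
    by have [e e0 he] := ha j hj; exists e.
  by exists 1; split => // /hj.
case/choice => f hf.
pose eps0 := \big[Order.min/1]_(j < m) f j.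
have e0 : 0 < eps0 by apply: lt_bigmin => // j _; case: (hf j).
have mexp : forall (c : R) j, measurable_fun setT (fun w => expR (c * r j w)).
  move=> c j; apply: measurableT_comp; first exact: measurable_realfun.measurable_expR.
  by apply: measurable_realfun.measurable_funM => //; exact: mr.
have hint : forall j, U j -> (\int[P]_w (expR (eps0 * r j w))%:E < +oo)%E.
  move=> j /asboolP Uj; case: (hf j) => _ /(_ Uj); apply: le_lt_trans.
  apply: ge0_le_integral => //; try by apply/measurable_realfun.measurable_EFinP; exact: mexp.
  move=> w _; rewrite lee_fin ler_expR; apply: ler_wpM2r => //.
  exact: bigmin_le.
have [A [D [A0 [D0 hA]]]] : exists A D : R, [/\ 0 <= A, 0 <= D &
    {ae P, forall w, r j1 w <= A + D * \sum_(j < m | U j) r j w}].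
  case: hb => [Uj1|[_ hb]].
    exists 0, 1; split => //; apply: aeW => w.
    rewrite add0r mul1r (bigD1 j1) /=; last exact/asboolP.
    by rewrite lerDl; apply: sumr_ge0.
  have [M1 hM1] := hb (fun _ => 1) (fun _ => ler01).
  eexists; eexists; split; last first.
    apply: filterS hae => w hw.
    have [hX _] := hw T (ltW T0).
    apply: (@cons_bound R n m nu x0 (fun j => r j w) j1 M1) => //.
    move=> i.
    have -> : (x0 i)%:R + \sum_(j < m) (nu j i)%:~R * r j w =
      ((x0 i)%:Z + \sum_(j < m) nu j i * (Rc cstar j w T)%:Z)%:~R.
      rewrite rmorphD rmorph_sum; congr (_ + _); apply: eq_bigr => j _.
      by rewrite rmorphM.
    by rewrite -(hX i) ler0z.
  - apply: mulr_ge0; first by rewrite le_max lexx orbT.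
    apply: sumr_ge0 => j /asboolP Uj; apply: sumr_ge0 => i _.
    by rewrite ler0z; exact: Uj.
  - apply: mulr_ge0; first by rewrite le_max lexx orbT.
    by apply: addr_ge0 => //; apply: sumr_ge0 => i _; exact: ler0n.
have [a a0 ha'] := @key _ _ _ P m r U j1 A D eps0 mr r0 A0 D0 e0 hint hA.
exists (cstar * (expR a - 1)).
  by apply: mulr_gt0 => //; rewrite subr_gt0 expR_gt1.
rewrite (eq_integral (fun w => (expR (a * r j1 w))%:E)) // => w _.
have -> : (cstar + cstar * (expR a - 1)) / cstar = expR a.
  rewrite mulrBr mulr1 addrC subrK [cstar * _]mulrC mulfK //.
  by rewrite gt_eqF.
by rewrite -expRM_natl mulrC.
Qed.
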